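(* Let $H=E+D$ and $K=E'+D'$ be closed additive subgroups of $\mathbb{R}^{n}$ (with decompositions as in the context) and let $f:H\to K$ be a homomorphism of closed additive groups. Then (i) $\mathrm{Ker}(f)$ is a closed additive subgroup of $\mathbb{R}^n$, and (ii) $\mathrm{Im}(f)$ is a closed additive subgroup of $\mathbb{R}^n$.
   Context: Every closed additive subgroup $H$ of $\mathbb{R}^n$ can be written $H=E+D$ with $E$ a vector subspace and $D$ a discrete additive subgroup with $E\cap\mathrm{vect}(D)=\{0\}$ ($\mathrm{vect}$ = real span); such decompositions $H=E+D$, $K=E'+D'$ are fixed. A map $f:H\to K$ is a homomorphism of closed additive groups if there are a linear map $f_1:E\to E'$ and a group homomorphism $f_2:D\to D'$ with $f(\lambda x+py)=\lambda f_1(x)+pf_2(y)$ for all $\lambda\in\mathbb{R}$, $p\in\mathbb{Z}$, $x\in E$, $y\in D$. *)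

(* Defs.v *)
From HB Require Import structures.
From mathcomp Require Import all_boot all_order all_algebra.
From mathcomp Require Import all_classical all_reals all_analysis.
Set Implicit Arguments. Unset Strict Implicit. Unset Printing Implicit Defensive.
Import Order.TTheory GRing.Theory Num.Theory.
Import numFieldNormedType.Exports.
Local Open Scope classical_set_scope.
Local Open Scope ring_scope.

Section Defs.
Variables (R : realType) (n : nat).
Notation V := 'rV[R]_n.

Definition add_subgroup (A : set V) : Prop :=
  A 0 /\ (forall x y, A x -> A y -> A (x - y)).

Definition closed_add_subgroup (A : set V) : Prop :=
  add_subgroup A /\ closed A.

Definition vsubspace (E : set V) : Prop :=
  E 0 /\ (forall (a : R) x y, E x -> E y -> E (a *: x + y)).

Definition discrete_add_subgroup (D : set V) : Prop :=
  add_subgroup D /\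
  (forall x, D x -> exists U, nbhs x U /\ U `&` D = [set x]).

Definition vect (D : set V) : set V :=
  [set v | exists (k : nat) (c : 'I_k -> R) (w : 'I_k -> V),
     (forall i, D (w i)) /\ v = \sum_(i < k) c i *: w i].

Definition setadd (A B : set V) : set V :=
  [set z | exists x y, A x /\ B y /\ z = x + y].

Definition cag_decomp (H E D : set V) : Prop :=
  vsubspace E /\ discrete_add_subgroup D /\
  E `&` vect D = [set 0] /\ H = setadd E D.

Definition cag_hom (E D E' D' : set V) (f : V -> V) : Prop :=
  exists (f1 f2 : V -> V),
    (forall x, E x -> E' (f1 x)) /\
    (forall (a : R) x y, E x -> E y -> f1 (a *: x + y) = a *: f1 x + f1 y) /\
    (forall y, D y -> D' (f2 y)) /\
    (forall y z, D y -> D z -> f2 (y + z) = f2 y + f2 z) /\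
    (forall (l : R) (p : int) x y, E x -> D y ->
        f (l *: x + y *~ p) = l *: f1 x + f2 y *~ p).

Definition Ker (H : set V) (f : V -> V) : set V := [set h | H h /\ f h = 0].
Definition Im (H : set V) (f : V -> V) : set V := f @` H.

End Defs.

(* Main.v *)
Require Import Defs.
From HB Require Import structures.
From mathcomp Require Import all_boot all_order all_algebra.
From mathcomp Require Import all_classical all_reals all_analysis.
Import numFieldNormedType.Exports.
Local Open Scope classical_set_scope.
Local Open Scope ring_scope.

Module AuxM.
Import Order.TTheory GRing.Theory Num.Theory.
Section Aux.
Variables (R : realType) (n : nat).
Notation V := 'rV[R]_n.

Lemma mulmx_cont (A : 'M[R]_n) : continuous (fun v : V => v *m A).
Proof.
have -> : (fun v : V => v *m A) = (fun v => \sum_(i < n) v 0 i *: row i A).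
  by apply: funext => v; rewrite mulmx_sum_row.
apply: continuous_big; first exact: add_continuous.
move=> i _ x; apply: continuousZr_tmp.
exact: coord_continuous.
Qed.

Definition span (l : seq V) : 'M[R]_n := (\sum_(x <- l) <<x>>)%MS.

Lemma span_max (S : set V) : exists l : seq V,
  (forall x, x \in l -> S x) /\ (forall s, S s -> (s <= span l)%MS).
Proof.
pose P := fun k => `[< exists l : seq V, (forall x, x \in l -> S x) /\ \rank (span l) = k >].
have exP : exists k, P k.
  exists 0%N; apply/asboolP; exists [::]; split => //.
  by rewrite /span big_nil mxrank0.
have ubP : forall k, P k -> (k <= n)%N.
  by move=> k /asboolP [l [_ <-]]; exact: rank_leq_col.
case: (ex_maxnP exP ubP) => k /asboolP [l [lS rl]] kmax.
exists l; split => // s Ss.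
have sub : (span l <= span (s :: l))%MS by rewrite /span big_cons addsmxSr.
have rk : (\rank (span (s :: l)) <= k)%N.
  apply: kmax; apply/asboolP; exists (s :: l); split => //.
  by move=> x; rewrite inE => /orP [/eqP -> //|]; exact: lS.
have /eqmxP eq : (span l == span (s :: l))%MS.
  have := mxrank_leqif_eq sub; rewrite rl => /leqifP.
  case: ifP => // _ lt; by rewrite ltnNge rk in lt.
rewrite eq /span big_cons; apply: submx_trans (addsmxSl _ _).
by rewrite genmxE.
Qed.

Lemma span_sub_vsub (W : set V) (l : seq V) : vsubspace W ->
  (forall x, x \in l -> W x) -> forall v, (v <= span l)%MS -> W v.
Proof.
move=> [W0 Wl]; elim: l => [|x l IH] lW v.
  by rewrite /span big_nil submx0 => /eqP ->.
rewrite /span big_cons => /sub_addsmxP [[u1 u2] /= ->].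
have : (u1 *m <<x>> <= x)%MS by rewrite (submx_trans (submxMl _ _)) // genmxE.
move=> /sub_rVP [a ->].
apply: Wl; first by apply: lW; rewrite inE eqxx.
apply: IH; last exact: submxMl.
by move=> y yl; apply: lW; rewrite inE yl orbT.
Qed.


Lemma span_vect (D : set V) (l : seq V) :
  (forall x, x \in l -> D x) -> forall v, (v <= span l)%MS -> vect D v.
Proof.
elim: l => [|x l IH] lD v.
  rewrite /span big_nil submx0 => /eqP ->.
  by exists 0%N, (fun _ => 0), (fun _ => 0); split => [[]//|]; rewrite big_ord0.
rewrite /span big_cons => /sub_addsmxP [[u1 u2] /= ->].
have : (u1 *m <<x>> <= x)%MS by rewrite (submx_trans (submxMl _ _)) // genmxE.
move=> /sub_rVP [a ->].
have [k [c [w [wD ->]]]] : vect D (u2 *m span l).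
  apply: IH; last exact: submxMl.
  by move=> y yl; apply: lD; rewrite inE yl orbT.
exists k.+1, (fun i => if unlift ord0 i is Some j then c j else a),
  (fun i => if unlift ord0 i is Some j then w j else x); split.
  move=> i; case: unliftP => [j _|_]; first exact: wD.
  by apply: lD; rewrite inE eqxx.
rewrite big_ord_recl unlift_none; congr (_ + _).
by apply: eq_bigr => i _; rewrite liftK.
Qed.

Lemma vect_sub (D : set V) (M : 'M[R]_n) :
  (forall x, D x -> (x <= M)%MS) -> forall v, vect D v -> (v <= M)%MS.
Proof.
move=> DM v [k [c [w [wD ->]]]].
by apply: summx_sub => i _; apply: scalemx_sub; exact: DM.
Qed.

Lemma cap0 (M1 M2 : 'M[R]_n) :
  (forall u : V, (u <= M1)%MS -> (u <= M2)%MS -> u = 0) -> (M1 :&: M2 = 0)%MS.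
Proof.
move=> h; apply/eqP; rewrite -submx0; apply/row_subP => i.
have r := row_sub i (M1 :&: M2)%MS.
rewrite (h (row i (M1 :&: M2)%MS)) ?sub0mx //.
  by apply: submx_trans r _; exact: capmxSl.
by apply: submx_trans r _; exact: capmxSr.
Qed.

Lemma closed_subM (M : 'M[R]_n) (d : V) : closed [set v : V | (v - d <= M)%MS].
Proof.
have -> : [set v : V | (v - d <= M)%MS] =
   (fun v : V => v *m cokermx M) @^-1` [set d *m cokermx M].
  apply/seteqP; split => v /=; rewrite submxE mulmxBl subr_eq0.
    by move/eqP.
  by move=> ->.
apply: preimage_closed.
  2: by apply: accessible_closed_set1; apply: hausdorff_accessible; exact: norm_hausdorff.
by move=> x _; exact: mulmx_cont.
Qed.


Lemma gen_closed (E D W G : set V) :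
  vsubspace E -> (forall x, D x -> exists U, nbhs x U /\ U `&` D = [set x]) ->
  E `&` vect D = [set 0] -> closed (setadd E D) ->
  vsubspace W -> W `<=` E -> G `<=` D -> closed (setadd W G).
Proof.
move=> vE isoD cap cl vW WE GD.
have [lE [lEE EM]] := span_max E.
have [lD [lDD DM]] := span_max D.
have [lW [lWW WM]] := span_max W.
have c0 : (span lD :&: span lE = 0)%MS.
  apply: cap0 => u uD uE.
  have : (E `&` vect D) u.
    by split; [exact: span_sub_vsub uE | exact: span_vect uD].
  by rewrite cap.
pose p := fun v : V => v *m proj_mx (span lD) (span lE).
have pE : forall x y, E x -> D y -> p (x + y) = y.
  move=> x y Ex Dy; rewrite /p mulmxDl proj_mx_0 ?proj_mx_id ?add0r //.
    exact: DM.
  exact: EM.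
move=> z clz.
have : setadd E D z.
  apply: cl; apply: (closureS _ clz) => v [w [g [Ww [Gg ->]]]].
  by exists w, g; split; [exact: WE | split; [exact: GD|]].
move=> [e [d [Ee [Dd ze]]]].
have [U [Ud UD]] := isoD d Dd.
have pU : nbhs z (p @^-1` U).
  have hc := mulmx_cont (proj_mx (span lD) (span lE)) z.
  have pz : p z = d by rewrite ze pE.
  apply: hc; rewrite /= -/(p z) pz //.
have key : forall B, nbhs z B -> exists w, W w /\ G d /\ B (w + d).
  move=> B zB; have zBU : nbhs z (B `&` p @^-1` U) by apply: filterI.
  have [v [[w [g [Ww [Gg ->]]]] [Bv Uv]]] := clz _ zBU.
  have pv : p (w + g) = g := pE w g (WE w Ww) (GD g Gg).
  rewrite /= pv in Uv.
  have : (U `&` D) g by split; [|exact: GD].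
  rewrite UD => /= gd; subst g.
  by exists w.
have [w0 [_ [Gd _]]] := key setT filterT.
have Tz : [set v : V | (v - d <= span lW)%MS] z.
  apply: closed_subM => B zB.
  have [w [Ww [_ Bw]]] := key B zB.
  exists (w + d); split => //=.
  by rewrite addrK; exact: WM.
exists (z - d), d; split; last by split => //; rewrite subrK.
exact: span_sub_vsub Tz.
Qed.


Lemma setadd_sub (W G : set V) :
  vsubspace W -> add_subgroup G -> add_subgroup (setadd W G).
Proof.
move=> [W0 Wl] [G0 Gs]; split; first by exists 0, 0; rewrite addr0.
move=> _ _ [w1 [g1 [W1 [G1 ->]]]] [w2 [g2 [W2 [G2 ->]]]].
exists (w1 - w2), (g1 - g2); split; last split.
- by rewrite addrC -scaleN1r; apply: Wl.
- exact: Gs.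
- by rewrite opprD addrACA.
Qed.

End Aux.
End AuxM.
Import AuxM.

Theorem corollary4p2 (R : realType) (n : nat) (H E D K E' D' : set 'rV[R]_n)
  (f : 'rV[R]_n -> 'rV[R]_n) :
  closed_add_subgroup H -> cag_decomp H E D ->
  closed_add_subgroup K -> cag_decomp K E' D' ->
  cag_hom E D E' D' f ->
  closed_add_subgroup (Ker H f) /\ closed_add_subgroup (Im H f).
Proof.
Import GRing.Theory.
move=> [_ clH] [vE [[sD isoD] [capE HE]]] [_ clK] [vE' [[sD' isoD'] [capE' KE]]].
move=> [f1 [f2 [f1E [f1lin [f2D [f2add fdef]]]]]].
have [E0 El] := vE; have [E'0 E'l] := vE'; have [D0 Ds] := sD.
have fxy : forall x y, E x -> D y -> f (x + y) = f1 x + f2 y.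
  by move=> x y Ex Dy; have := fdef 1 1 x y Ex Dy; rewrite scale1r mulr1z scale1r.
have f10 : f1 0 = 0.
  have := f1lin 1 0 0 E0 E0; rewrite !scale1r addr0.
  by move/(congr1 (fun t => t - f1 0)); rewrite addrK subrr => /esym.
have f20 : f2 0 = 0.
  have := f2add 0 0 D0 D0; rewrite addr0.
  by move/(congr1 (fun t => t - f2 0)); rewrite addrK subrr => /esym.
have f2B : forall y z, D y -> D z -> f2 (y - z) = f2 y - f2 z.
  move=> y z Dy Dz; have := f2add (y - z) z (Ds _ _ Dy Dz) Dz.
  by rewrite subrK => ->; rewrite addrK.
have kerE : Ker H f = setadd (E `&` [set x | f1 x = 0]) (D `&` [set y | f2 y = 0]).
  apply/seteqP; split.
    move=> h [Hh fh]; rewrite HE in Hh; move: Hh fh => [x [y [Ex [Dy ->]]]].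
    rewrite fxy // => s0.
    have e2 : f2 y = - f1 x by apply/eqP; rewrite -subr_eq0 opprK addrC s0.
    have : (E' `&` vect D') (f2 y).
      split.
        by rewrite e2 -[- f1 x]addr0 -scaleN1r; apply: E'l => //; exact: f1E.
      exists 1%N, (fun _ => 1), (fun _ => f2 y); split; first by move=> _; exact: f2D.
      by rewrite big_ord1 scale1r.
    rewrite capE' => /= y0.
    exists x, y; split; [split => // | split => //].
    by move: s0; rewrite y0 addr0.
  move=> _ [x [y [[Ex fx] [[Dy fy] ->]]]]; split.
    by rewrite HE; exists x, y.
  by rewrite fxy // fx fy addr0.
have imE : Im H f = setadd (f1 @` E) (f2 @` D).
  apply/seteqP; split.
    move=> _ [h Hh <-]; rewrite HE in Hh; move: Hh => [x [y [Ex [Dy ->]]]].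
    by rewrite fxy //; exists (f1 x), (f2 y); split; [exists x|split; [exists y|]].
  move=> _ [_ [_ [[x Ex <-] [[y Dy <-] ->]]]].
  by exists (x + y); [rewrite HE; exists x, y | rewrite fxy].
have vker : vsubspace (E `&` [set x | f1 x = 0]).
  split; first by split.
  move=> a x y [Ex fx] [Ey fy]; split; first exact: El.
  by rewrite /= f1lin // fx fy scaler0 addr0.
have sker : add_subgroup (D `&` [set y | f2 y = 0]).
  split; first by split.
  move=> y z [Dy fy] [Dz fz]; split; first exact: Ds.
  by rewrite /= f2B // fy fz subrr.
have vim : vsubspace (f1 @` E).
  split; first by exists 0.
  move=> a _ _ [x Ex <-] [y Ey <-]; exists (a *: x + y); first exact: El.
  exact: f1lin.
have sim : add_subgroup (f2 @` D).
  split; first by exists 0.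
  move=> _ _ [y Dy <-] [z Dz <-]; exists (y - z); first exact: Ds.
  exact: f2B.
split.
  rewrite kerE; split; first exact: setadd_sub.
  apply: (@gen_closed _ _ E D _ _ vE isoD capE); first by rewrite -HE.
    exact: vker.
    by move=> x [].
  by move=> x [].
rewrite imE; split; first exact: setadd_sub.
apply: (@gen_closed _ _ E' D' _ _ vE' isoD' capE'); first by rewrite -KE.
  exact: vim.
  by move=> _ [x Ex <-]; exact: f1E.
by move=> _ [y Dy <-]; exact: f2D.
Qed.
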